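(* Every inductive poset is divisional.
   Context: All posets are finite, have a unique minimal element $\hat0$ and are ranked; $\chi_{\mathcal{P}}(t)=\sum_x\mu(\hat0,x)t^{\operatorname{rk}(\mathcal{P})-\operatorname{rk}(x)}$ with $\operatorname{rk}(\mathcal{P})=\max\operatorname{rk}$. Atoms are rank-1 elements, $A(\mathcal{P})$ their set; $\bigvee T$ is the set of minimal upper bounds of $T$. A lattice is geometric if $y$ covers $x$ iff there is an atom $a\not\le x$ with $y=x\vee a$; $\mathcal{P}$ is locally geometric if each $\mathcal{P}_{\le x}$ is a geometric lattice. For an atom $a$: $\mathcal{P}'$ is the subposet consisting of $\hat0$ and all elements of $\bigvee T$ for nonempty $T\subseteq A(\mathcal{P})\setminus\{a\}$; $\mathcal{P}''=\mathcal{P}_{\ge a}$ (minimal element $a$, rank $\operatorname{rk}-1$). Inductive posets: smallest class of locally geometric posets containing $\{\hat0\}$ and containing $\mathcal{P}$ whenever some atom $a$ has $\mathcal{P}',\mathcal{P}''$ inductive and $\chi_{\mathcal{P}''}\mid\chi_{\mathcal{P}'}$. Divisional posets: smallest class of locally geometric posets containing $\{\hat0\}$ and containing $\mathcal{P}$ whenever some atom $a$ has $\mathcal{P}''$ divisional and $\chi_{\mathcal{P}''}\mid\chi_{\mathcal{P}}$. *)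

(* Defs.v *)
(* Posets are finite subsets S of an ambient finite partial
   order T, carrying the induced order.  All constructions (P_{<=x}, P', P'')
   are again subsets of T. *)
From HB Require Import structures.
From mathcomp Require Import all_boot all_order all_algebra.
Set Implicit Arguments. Unset Strict Implicit. Unset Printing Implicit Defensive.
Import Order.Theory GRing.Theory Num.Theory.

Section PosetDefs.
Context {disp : Order.disp_t} {T : finPOrderType disp}.
Implicit Types (S L C X : {set T}) (x y z a : T).

Local Open Scope order_scope.

Definition minimals S : {set T} :=
  [set x in S | [forall y in S, (y <= x) ==> (y == x)]].

Definition has_unique_min S : Prop := #|minimals S| = 1%N.

(* the minimal element (meaningful when it is unique) *)
Definition bottom_of S : option T := [pick x in minimals S].

Definition chain C : bool := [forall x in C, forall y in C, x >=< y].

(* height of x in S: length of the longest chain of S with top element x;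
   in a ranked poset with \hat0 this is rk(x) *)
Definition height S x : nat :=
  \max_(C : {set T} | [&& C \subset S, x \in C, chain C &
                          [forall y in C, y <= x]]) #|C|.-1.

Definition covers S x y : bool :=
  [&& x \in S, y \in S, x < y & [forall z in S, ~~ ((x < z) && (z < y))]].

(* S is ranked: every maximal chain of [\hat0, x] has the same length,
   i.e. covering steps increase the rank (= height) by exactly one *)
Definition ranked S : Prop :=
  forall x y, covers S x y -> height S y = (height S x).+1.

Definition std_poset S : Prop := has_unique_min S /\ ranked S.

Definition poset_rank S : nat := \max_(x in S) height S x.

Definition atoms S : {set T} := [set x in S | height S x == 1%N].

Definition downset S x : {set T} := [set y in S | y <= x].
Definition upset S x : {set T} := [set y in S | x <= y].

Definition upper_bound S X z : bool := (z \in S) && [forall t in X, t <= z].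
Definition min_upper_bounds S X : {set T} :=
  [set z | upper_bound S X z &&
           [forall w, upper_bound S X w ==> (w <= z) ==> (w == z)]].

Definition is_join L x y z : bool :=
  [&& z \in L, x <= z, y <= z & [forall w in L, (x <= w) ==> (y <= w) ==> (z <= w)]].

Definition is_lattice L : Prop :=
  (forall x y, x \in L -> y \in L -> exists z, is_join L x y z) /\
  (forall x y, x \in L -> y \in L -> exists z,
     [&& z \in L, z <= x, z <= y & [forall w in L, (w <= x) ==> (w <= y) ==> (w <= z)]]).

Definition geometric_lattice L : Prop :=
  is_lattice L /\
  forall x y, x \in L -> y \in L ->
    (covers L x y <-> exists2 a, a \in atoms L & ~~ (a <= x) /\ is_join L x a y).

Definition locally_geometric S : Prop :=
  forall x, x \in S -> geometric_lattice (downset S x).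

(* Moebius function mu_S(a, y), defined by the usual recursion
   mu(a,a) = 1, mu(a,y) = - sum_{a <= z < y} mu(a,z); the recursion depth is
   bounded by the length of chains, so #|T|.+1 steps of fuel suffice. *)
Fixpoint mobius_rec S a (n : nat) y : int :=
  match n with
  | 0 => 0%R
  | n'.+1 => if y == a then 1%R
             else (- \sum_(z in S | ((a <= z) && (z < y))%O) mobius_rec S a n' z)%R
  end.
Definition mobius S a y : int := mobius_rec S a #|T|.+1 y.

Definition char_poly S : {poly int} :=
  match bottom_of S with
  | Some z => (\sum_(x in S) (mobius S z x)%:P * 'X^(poset_rank S - height S x))%R
  | None => 0%R
  end.

Definition poly_dvd (p q : {poly int}) : Prop := exists r : {poly int}, q = (r * p)%R.

Definition deletion S a : {set T} :=
  minimals S :|: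
  [set z | [exists X : {set T}, [&& X != set0, X \subset atoms S :\ a &
                                     z \in min_upper_bounds S X]]].

Definition restriction S a : {set T} := upset S a.

Inductive inductive_poset : {set T} -> Prop :=
| inductive_base S : #|S| = 1%N -> inductive_poset S
| inductive_step S a :
    std_poset S -> locally_geometric S -> a \in atoms S ->
    inductive_poset (deletion S a) -> inductive_poset (restriction S a) ->
    poly_dvd (char_poly (restriction S a)) (char_poly (deletion S a)) ->
    inductive_poset S.

Inductive divisional_poset : {set T} -> Prop :=
| divisional_base S : #|S| = 1%N -> divisional_poset S
| divisional_step S a :
    std_poset S -> locally_geometric S -> a \in atoms S ->
    divisional_poset (restriction S a) ->
    poly_dvd (char_poly (restriction S a)) (char_poly S) ->
    divisional_poset S.

End PosetDefs.

(* Main.v *)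
Require Import Defs.
From mathcomp Require Import all_boot all_order all_algebra.
From mathcomp Require Import zify.
Set Implicit Arguments. Unset Strict Implicit. Unset Printing Implicit Defensive.
Import Order.Theory GRing.Theory Num.Theory.

Section Poset.
Context {disp : Order.disp_t} {T : finPOrderType disp}.
Implicit Types (S L C X : {set T}) (x y z a : T).
Local Open Scope order_scope.

Lemma ex_minimal X x : x \in X ->
  exists m, [/\ m \in X, m <= x & forall y, y \in X -> y <= m -> y = m].
Proof.
move=> xX; have [n] := ubnP #|[set y in X | y < x]|.
elim: n x xX => [|n IH] x xX Hc; first by rewrite ltn0 in Hc.
case: (boolP [exists y in X, y < x]).
- case/exists_inP => y yX ltyx.
  have [|m [mX mley H]] := IH y yX.
    suff : (#|[set y0 in X | (y0 < y)%O]| < #|[set y0 in X | (y0 < x)%O]|)%N by move=> H2; apply: leq_trans H2 _; rewrite -ltnS.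
    apply: proper_card; apply/properP; split.
      apply/subsetP => z; rewrite !inE => /andP[zX zy]; by rewrite zX (lt_trans zy ltyx).
    by exists y; rewrite !inE ?yX ?ltyx ?ltxx.
  exists m; split => //; exact: le_trans mley (ltW ltyx).
- move/exists_inPn => H; exists x; split => // y yX.
  rewrite le_eqVlt => /orP[/eqP //|lt]; by move: (H y yX); rewrite lt.
Qed.

Lemma ex_maximal X x : x \in X ->
  exists m, [/\ m \in X, x <= m & forall y, y \in X -> m <= y -> y = m].
Proof.
move=> xX; have [n] := ubnP #|[set y in X | x < y]|.
elim: n x xX => [|n IH] x xX Hc; first by rewrite ltn0 in Hc.
case: (boolP [exists y in X, x < y]).
- case/exists_inP => y yX ltyx.
  have [|m [mX mley H]] := IH y yX.
    suff : (#|[set y0 in X | (y < y0)%O]| < #|[set y0 in X | (x < y0)%O]|)%N by move=> H2; apply: leq_trans H2 _; rewrite -ltnS.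
    apply: proper_card; apply/properP; split.
      apply/subsetP => z; rewrite !inE => /andP[zX zy]; by rewrite zX (lt_trans ltyx zy).
    by exists y; rewrite !inE ?yX ?ltyx ?ltxx.
  exists m; split => //; exact: le_trans (ltW ltyx) mley.
- move/exists_inPn => H; exists x; split => // y yX.
  rewrite le_eqVlt => /orP[/eqP //|lt]; by move: (H y yX); rewrite lt.
Qed.

Lemma min_le S z0 : minimals S = [set z0] -> forall x, x \in S -> z0 <= x.
Proof.
move=> Hm x xS; have [m [mS mx H]] := ex_minimal xS.
have : m \in minimals S.
  rewrite inE mS /=; apply/forall_inP => y yS; apply/implyP => ym.
  by rewrite (H y yS ym).
by rewrite Hm inE => /eqP <-.
Qed.

Lemma min_in S z0 : minimals S = [set z0] -> z0 \in S.
Proof. move=> Hm; have : z0 \in minimals S by rewrite Hm set11. by rewrite inE => /andP[]. Qed.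

Lemma height_ge S x C : C \subset S -> x \in C -> chain C ->
  (forall y, y \in C -> y <= x) -> (#|C|.-1 <= height S x)%N.
Proof.
move=> sub xC ch H; rewrite /height.
apply: (leq_bigmax_cond C); rewrite sub xC ch /=; apply/forall_inP => y yC; exact: H.
Qed.

Lemma height_wit S x : x \in S -> exists C, [/\ C \subset S, x \in C, chain C,
   forall y, y \in C -> y <= x & height S x = #|C|.-1].
Proof.
move=> xS.
pose P := fun C : {set T} => [&& C \subset S, x \in C, chain C & [forall y in C, y <= x]].
have : (0 < #|P|)%N.
  apply/card_gt0P; exists [set x]; rewrite -topredE /= /P sub1set xS set11 /=.
  apply/andP; split.
    by apply/forall_inP => u; rewrite inE => /eqP ->; apply/forall_inP => v; rewrite inE => /eqP ->; rewrite comparablexx.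
  by apply/forall_inP => u; rewrite inE => /eqP ->.
move=> /(@eq_bigmax_cond _ _ (fun C : {set T} => #|C|.-1)) [C PC Heq].
move: PC; rewrite /P /in_mem /= => /and4P[sub xC ch /forall_inP H].
exists C; split => //; rewrite /height -Heq //.
Qed.


Lemma chainU1 C y : chain C -> (forall c, c \in C -> c <= y) -> chain (y |: C).
Proof.
move=> /forall_inP ch H; apply/forall_inP => u; rewrite in_setU1 => /orP[/eqP->|uC];
  apply/forall_inP => v; rewrite in_setU1 => /orP[/eqP->|vC].
- exact: comparablexx.
- by rewrite /Order.comparable H ?orbT.
- by rewrite /Order.comparable H.
- by move/forall_inP: (ch u uC); apply.
Qed.

Lemma height_lt S x y : x \in S -> y \in S -> x < y -> (height S x < height S y)%N.
Proof.
move=> xS yS lxy; have [C [sub xC ch H ->]] := height_wit xS.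
have yC : y \notin C by apply/negP => /H yx; move: (lt_le_trans lxy yx); rewrite ltxx.
have Hc : (#|y |: C| = #|C|.+1)%N by rewrite cardsU1 yC.
have := @height_ge S y (y |: C).
rewrite Hc /= => Hle.
have C0 : (0 < #|C|)%N by apply/card_gt0P; exists x.
apply: leq_trans (Hle _ _ _ _); first by rewrite prednK.
- by rewrite subUset sub1set yS sub.
- by rewrite setU11.
- by apply: chainU1 => // c /H cx; exact: le_trans cx (ltW lxy).
- by move=> c; rewrite in_setU1 => /orP[/eqP->//|/H cx]; exact: le_trans cx (ltW lxy).
Qed.

Lemma height_le_sub S S' x : S' \subset S -> (height S' x <= height S x)%N.
Proof.
move=> sub; apply/bigmax_leqP => C /and4P[sC xC ch /forall_inP H].
apply: height_ge => //; exact: subset_trans sub.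
Qed.

Lemma height_eq_sub S S' x : S' \subset S -> x \in S' ->
  (forall y, y \in S -> y <= x -> y \in S') -> height S' x = height S x.
Proof.
move=> sub xS' H; apply/eqP; rewrite eqn_leq height_le_sub //=.
have xS : x \in S by apply: (subsetP sub).
have [C [sC xC ch HC ->]] := height_wit xS.
apply: height_ge => //; apply/subsetP => c cC; apply: H; [exact: (subsetP sC) | exact: HC].
Qed.

Lemma height_min S z0 : minimals S = [set z0] -> height S z0 = 0%N.
Proof.
move=> Hm; have z0S := min_in Hm.
have [C [sC xC ch HC ->]] := height_wit z0S.
suff : C \subset [set z0] by move/subset_leq_card; rewrite cards1; case: #|C| => [|[]].
apply/subsetP => c cC; rewrite inE; apply/eqP/le_anti.
by rewrite HC // (min_le Hm) // (subsetP sC).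
Qed.


Lemma atomP S z0 a : minimals S = [set z0] -> a \in atoms S ->
  [/\ a \in S, height S a = 1%N, a != z0 & z0 < a].
Proof.
move=> Hm; rewrite inE => /andP[aS /eqP ha].
have az : a != z0 by apply/eqP => e; move: ha; rewrite e height_min.
by split => //; rewrite lt_def az (min_le Hm).
Qed.

Lemma atom_below S z0 x : minimals S = [set z0] -> x \in S -> x != z0 ->
  exists2 b, b \in atoms S & b <= x.
Proof.
move=> Hm xS xz.
have xX : x \in [set y in S | (y <= x) && (y != z0)] by rewrite inE xS lexx xz.
have [b [] ] := ex_minimal xX; rewrite inE => /and3P[bS bx bz] _ Hmin.
exists b => //; rewrite inE bS /=; apply/eqP/anti_leq/andP; split.
  have [C [sC bC ch HC ->]] := height_wit bS.
  suff : C \subset [set z0; b].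
    by move/subset_leq_card; rewrite cards2; case: (z0 != b) => /=; lia.
  apply/subsetP => c cC; rewrite !inE; have cS := subsetP sC c cC.
  case: eqP => //= /eqP cz; apply/eqP; apply: Hmin (HC c cC).
  by rewrite inE cS cz (le_trans (HC c cC) bx).
have := @height_lt S z0 b (min_in Hm) bS; rewrite height_min //; apply.
by rewrite lt_def bz (min_le Hm).
Qed.

Lemma atom_le S z0 a b : minimals S = [set z0] -> a \in atoms S -> b \in atoms S ->
  b <= a -> b = a.
Proof.
move=> Hm aA bA; have [aS ha _ _] := atomP Hm aA; have [bS hb _ _] := atomP Hm bA.
rewrite le_eqVlt => /orP[/eqP//|lt].
by have := height_lt bS aS lt; rewrite ha hb.
Qed.


Lemma mub_ub S X z : z \in min_upper_bounds S X -> z \in S /\ forall t, t \in X -> t <= z.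
Proof. by rewrite inE => /andP[/andP[zS /forall_inP H] _]. Qed.

Lemma mub_min S X z w : z \in min_upper_bounds S X -> w \in S -> (forall t, t \in X -> t <= w) ->
  w <= z -> w = z.
Proof.
rewrite inE => /andP[_ /forallP H] wS Hw wz; apply/eqP.
have Hub : upper_bound S X w by rewrite /upper_bound wS; apply/forall_inP.
by move: (H w); rewrite Hub wz.
Qed.

Lemma mub_intro S X z : z \in S -> (forall t, t \in X -> t <= z) ->
  (forall w, w \in S -> (forall t, t \in X -> t <= w) -> w <= z -> w = z) ->
  z \in min_upper_bounds S X.
Proof.
move=> zS Hz H; rewrite inE /upper_bound zS /=; apply/andP; split; first by apply/forall_inP.
apply/forallP => w; apply/implyP => /andP[wS /forall_inP Hw]; apply/implyP => wz.
by rewrite (H w wS Hw wz).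
Qed.

Lemma mub_exists S X x : x \in S -> (forall t, t \in X -> t <= x) ->
  exists2 y, y \in min_upper_bounds S X & y <= x.
Proof.
move=> xS Hx.
have xY : x \in [set w in S | [forall t in X, t <= w] && (w <= x)].
  by rewrite inE xS lexx andbT; apply/forall_inP.
have [m [] ] := ex_minimal xY; rewrite inE => /and3P[mS /forall_inP Hmt mx] _ Hmin.
exists m => //; apply: mub_intro => //; move=> w wS Hw wm; apply: (Hmin w _ wm).
by rewrite inE wS (le_trans wm mx) andbT; apply/forall_inP.
Qed.

Lemma mub_unique S X x y1 y2 : locally_geometric S -> x \in S -> X \subset S ->
  y1 \in min_upper_bounds S X -> y2 \in min_upper_bounds S X -> y1 <= x -> y2 <= x -> y1 = y2.
Proof.
move=> lg xS XS m1 m2 y1x y2x.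
have [[_ Hmeet] _] := lg x xS.
have [y1S H1] := mub_ub m1; have [y2S H2] := mub_ub m2.
have y1L : y1 \in downset S x by rewrite inE y1S y1x.
have y2L : y2 \in downset S x by rewrite inE y2S y2x.
have [m /and4P[mL my1 my2 /forall_inP Hm]] := Hmeet y1 y2 y1L y2L.
have mS : m \in S by move: mL; rewrite inE => /andP[].
have Ht : forall t, t \in X -> t <= m.
  move=> t tX; have tS := subsetP XS t tX.
  have tL : t \in downset S x by rewrite inE tS (le_trans (H1 t tX) y1x).
  by move: (Hm t tL); rewrite H1 // H2.
by rewrite -(mub_min m1 mS Ht my1) -(mub_min m2 mS Ht my2).
Qed.


Local Open Scope ring_scope.

Lemma split_sub (A : {set T}) a (F : {set T} -> int) : a \in A ->
  \sum_(B : {set T} | B \subset A) F B =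
  \sum_(C : {set T} | C \subset A :\ a) F C + \sum_(C : {set T} | C \subset A :\ a) F (a |: C).
Proof.
move=> aA; rewrite (bigID (fun B : {set T} => a \in B)) /= addrC; congr (_ + _).
  by apply: eq_bigl => B; rewrite subsetD1.
rewrite (reindex_onto (fun C => a |: C) (fun B => B :\ a)) /=.
  apply: eq_bigl => C; rewrite subsetD1 setU11 andbT.
  case aC: (a \in C) => /=.
    have -> : ((a |: C) :\ a == C) = false.
      by apply/negbTE/eqP => e; move: (setD11 a (a |: C)); rewrite e aC.
    by rewrite !andbF.
  by rewrite (setU1K (negbT aC)) eqxx subUset sub1set aA andbT.
by move=> B /andP[_ aB]; exact: setD1K.
Qed.

Lemma alt_sum (D : {set T}) :
  \sum_(B : {set T} | B \subset D) (-1) ^+ #|B| = (D == set0)%:R :> int.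
Proof.
case: (set_0Vmem D) => [->|[d dD]].
  rewrite (eq_bigl (pred1 set0)); last by move=> B; rewrite subset0.
  by rewrite big_pred1_eq cards0 eqxx.
have -> : (D == set0) = false by apply/negbTE/set0Pn; exists d.
rewrite (split_sub _ dD) -big_split /=; apply: big1 => C sC.
have dC : d \notin C by move: sC; rewrite subsetD1 => /andP[].
by rewrite cardsU1 dC add1n exprS mulN1r addrN.
Qed.

Lemma alt_le (Om : {set T}) y :
  \sum_(B : {set T} | B \subset Om) (if [forall t in B, t <= y]%O then (-1) ^+ #|B| else 0)
  = ([set t in Om | (t <= y)%O] == set0)%:R :> int.
Proof.
rewrite -big_mkcondr -alt_sum; apply: eq_bigl => B.
apply/andP/subsetP.
  by case=> /subsetP sB /forall_inP H t tB; rewrite inE sB // H.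
move=> H; split; first by apply/subsetP => t /H; rewrite inE => /andP[].
by apply/forall_inP => t /H; rewrite inE => /andP[].
Qed.


Definition wsum (Om : {set T}) (M : {set T} -> {set T}) S z : int :=
  \sum_(B : {set T} | B \subset Om)
     (if z \in min_upper_bounds S (M B) then (-1) ^+ #|B| else 0).

Lemma wsum_down S (U Om : {set T}) (c y : T) (M : {set T} -> {set T}) : locally_geometric S -> y \in S -> U \subset S ->
  (forall B : {set T}, B \subset Om -> M B \subset S) ->
  (forall (B : {set T}) z, B \subset Om -> z \in min_upper_bounds S (M B) -> (z \in U) && (c <= z)%O) ->
  \sum_(z in U | ((c <= z) && (z <= y))%O) wsum Om M S z =
  \sum_(B : {set T} | B \subset Om)
     (if [forall t in M B, t <= y]%O then (-1) ^+ #|B| else 0).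
Proof.
move=> lg yS US MS HU; rewrite /wsum exchange_big /=; apply: eq_bigr => B BOm.
case: ifP => [/forall_inP Hall | Hn].
- have [y0 m0 y0y] := mub_exists yS Hall.
  have /andP[y0U cy0] := HU B y0 BOm m0.
  rewrite (bigD1 y0) /=; last by rewrite y0U cy0 y0y.
  rewrite m0 big1 ?addr0 // => z /andP[/andP[zU /andP[cz zy]] zy0].
  case: ifP => // mz; case/eqP: zy0; exact: (mub_unique lg yS (MS B BOm) mz m0 zy y0y).
- apply: big1 => z /andP[zU /andP[cz zy]]; case: ifP => // mz.
  have [_ H] := mub_ub mz; move/negbT: Hn => /forall_inPn [t tM].
  by rewrite (le_trans (H t tM) zy).
Qed.

Lemma mobius_char S a (g : T -> int) : a \in S ->
  (forall y, y \in S -> (a <= y)%O ->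
     \sum_(z in S | ((a <= z) && (z <= y))%O) g z = (y == a)%:R) ->
  forall y, y \in S -> (a <= y)%O -> mobius S a y = g y.
Proof.
move=> aS H.
have ga : g a = 1.
  have := H a aS (lexx a); rewrite eqxx (bigD1 a) /=; last by rewrite aS lexx.
  rewrite big1 ?addr0 // => z /andP[/andP[zS /andP[az za]] zna].
  by case/eqP: zna; apply/le_anti; rewrite az za.
have Hrec : forall y, y \in S -> (a <= y)%O -> y != a ->
    g y = - \sum_(z in S | ((a <= z) && (z < y))%O) g z.
  move=> y yS ay ya; have := H y yS ay; rewrite (negbTE ya) (bigD1 y) /=; last by rewrite yS ay lexx.
  move=> /eqP; rewrite addr_eq0 => /eqP ->; congr (- _); apply: eq_bigl => z.
  rewrite lt_def [y == z]eq_sym.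
  by case: (z \in S); case: (a <= z)%O; case: (z <= y)%O; case: (z != y).
suff main : forall n y, y \in S -> (a <= y)%O ->
    (#|[set z in S | ((a <= z) && (z < y))%O]| < n)%N -> mobius_rec S a n y = g y.
  by move=> y yS ay; apply: main => //; rewrite ltnS max_card.
elim=> [|n IH] y yS ay Hc; first by rewrite ltn0 in Hc.
rewrite /=; case: eqP => [->|/eqP ya]; first by rewrite ga.
rewrite (Hrec y yS ay ya); congr (- _); apply: eq_bigr => z /andP[zS /andP[az zy]].
apply: IH => //.
have : (#|[set w in S | ((a <= w) && (w < z))%O]| < #|[set w in S | ((a <= w) && (w < y))%O]|)%N.
  apply: proper_card; apply/properP; split.
    apply/subsetP => w; rewrite !inE => /andP[wS /andP[aw wz]].
    by rewrite wS aw (lt_trans wz zy).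
  by exists z; rewrite !inE ?zS ?az ?zy ?ltxx ?andbF.
by move=> H2; apply: leq_trans H2 _; rewrite -ltnS.
Qed.


Lemma chainU1b C y : chain C -> (forall c, c \in C -> (y <= c)%O) -> chain (y |: C).
Proof.
move=> /forall_inP ch H; apply/forall_inP => u; rewrite in_setU1 => /orP[/eqP->|uC];
  apply/forall_inP => v; rewrite in_setU1 => /orP[/eqP->|vC].
- exact: comparablexx.
- by rewrite /Order.comparable H.
- by rewrite /Order.comparable H ?orbT.
- by move/forall_inP: (ch u uC); apply.
Qed.

Lemma bottom_ofE S z : minimals S = [set z] -> bottom_of S = Some z.
Proof.
move=> Hm; rewrite /bottom_of Hm; case: pickP => [w|]; first by rewrite inE => /eqP ->.
by move/(_ z); rewrite set11.
Qed.

Lemma covers_down S x u v : covers (downset S x) u v -> covers S u v.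
Proof.
case/and4P; rewrite !inE => /andP[uS ux] /andP[vS vx] uv /forall_inP H.
rewrite /covers uS vS uv /=; apply/forall_inP => w wS; apply/negP => /andP[uw wv].
by move: (H w); rewrite inE wS (le_trans (ltW wv) vx) uw wv => /(_ isT).
Qed.

Lemma atom_down S x b : b \in downset S x -> (b \in atoms (downset S x)) = (b \in atoms S).
Proof.
move=> bL; have := bL; rewrite inE => /andP[bS bx].
rewrite [b \in atoms _]inE [b \in atoms S]inE bL bS (@height_eq_sub S (downset S x) b) //.
  by apply/subsetP => w; rewrite inE => /andP[].
by move=> y yS yb; rewrite inE yS (le_trans yb bx).
Qed.

Lemma mub0 S z : z \in min_upper_bounds S set0 -> z \in minimals S.
Proof.
move=> m; have [zS _] := mub_ub m; rewrite inE zS /=; apply/forall_inP => w wS.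
apply/implyP => wz; apply/eqP; apply: (mub_min m wS) => // t; by rewrite inE.
Qed.


Section Main.
Context (S : {set T}) (a z0 : T) (Hm : minimals S = [set z0]) (rk : ranked S)
  (lg : locally_geometric S) (aA : a \in atoms S).

Local Notation A := (atoms S).
Local Notation D := (deletion S a).
Local Notation R := (restriction S a).

Lemma AS : A \subset S.
Proof. by apply/subsetP => t; rewrite inE => /andP[]. Qed.

Lemma z0S : z0 \in S. Proof. exact: min_in Hm. Qed.

Lemma z0le x : x \in S -> (z0 <= x)%O. Proof. move=> xS; exact: (min_le Hm xS). Qed.

Lemma aS : a \in S. Proof. exact: (subsetP AS). Qed.

Lemma D_sub : D \subset S.
Proof.
apply/subsetP => z; rewrite inE => /orP[|]; first by rewrite inE => /andP[].
by rewrite inE => /existsP [X /and3P[_ _ m]]; exact: (mub_ub m).1.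
Qed.

Lemma mub_D (B : {set T}) z : B \subset A :\ a -> z \in min_upper_bounds S B -> z \in D.
Proof.
move=> sB m; rewrite inE; case: (eqVneq B set0) => [E|Bn].
  by rewrite mub0 // -E.
by apply/orP; right; rewrite inE; apply/existsP; exists B; rewrite Bn sB m.
Qed.

Lemma D_cases z : z \in D -> z = z0 \/
  exists B : {set T}, [/\ B != set0, B \subset A :\ a & z \in min_upper_bounds S B].
Proof.
rewrite inE => /orP[|]; first by rewrite Hm inE => /eqP; left.
by rewrite inE => /existsP [X /and3P[Xn sX m]]; right; exists X.
Qed.

Lemma z0D : z0 \in D.
Proof. by rewrite inE Hm set11. Qed.

Lemma minD : minimals D = [set z0].
Proof.
apply/setP => z; rewrite [z \in minimals _]inE inE; apply/andP/eqP.
  case=> zD /forall_inP H; have := H z0 z0D.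
  by rewrite z0le ?(subsetP D_sub) // => /eqP.
move=> ->; split; first exact: z0D.
apply/forall_inP => w wD; apply/implyP => wz; apply/eqP/le_anti.
by rewrite wz z0le ?(subsetP D_sub).
Qed.

Lemma R_sub : R \subset S.
Proof. by apply/subsetP => y; rewrite inE => /andP[]. Qed.

Lemma aR : a \in R.
Proof. by rewrite inE aS lexx. Qed.

Lemma minR : minimals R = [set a].
Proof.
apply/setP => z; rewrite [z \in minimals _]inE inE; apply/andP/eqP.
  case=> zR /forall_inP H; have := H a aR.
  by move: zR; rewrite inE => /andP[_ ->] /= /eqP.
move=> ->; split; first exact: aR.
apply/forall_inP => w; rewrite inE => /andP[_ aw]; apply/implyP => wa; apply/eqP/le_anti.
by rewrite wa aw.
Qed.

Lemma A_empty y : y \in S -> ([set t in A | (t <= y)%O] == set0) = (y == z0).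
Proof.
move=> yS; case: (eqVneq y z0) => [->|yz].
  apply/eqP/setP => t; rewrite in_set0 in_set; apply/negbTE/andP => -[tA tz].
  have [tS _ tn _] := atomP Hm tA; move/eqP: tn; apply; apply/le_anti.
  by rewrite tz z0le.
apply/negbTE/set0Pn; have [b bA bly] := atom_below Hm yS yz; exists b; by rewrite in_set bA bly.
Qed.

Lemma Aa_empty_D y : y \in D -> ([set t in A :\ a | (t <= y)%O] == set0) = (y == z0).
Proof.
move=> yD; case: (D_cases yD) => [->|[B [Bn sB m]]].
  rewrite eqxx; apply/eqP/setP => t; rewrite in_set0 in_set; apply/negbTE/andP => -[/setD1P[_ tA] tz].
  have [tS _ tn _] := atomP Hm tA; move/eqP: tn; apply; apply/le_anti.
  by rewrite tz z0le.
have [t tB] := set0Pn _ Bn; have [yS Hy] := mub_ub m.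
have tA : t \in A :\ a := subsetP sB t tB.
have yz : y != z0.
  apply/eqP => e; move: tA; rewrite inE => /andP[_ tA].
  have [_ _ tn _] := atomP Hm tA; move/eqP: tn; apply; apply/le_anti.
  by rewrite -{1}e Hy // z0le // (subsetP AS).
rewrite (negbTE yz); apply/negbTE/set0Pn; exists t; by rewrite in_set tA Hy.
Qed.

Lemma other_atom y : y \in S -> (a < y)%O ->
  exists b, [/\ b \in A, b != a & (b <= y)%O].
Proof.
move=> yS ay.
have yX : y \in [set w in S | (a < w)%O && (w <= y)%O] by rewrite inE yS ay lexx.
have [m [] ] := ex_minimal yX; rewrite inE => /and3P[mS am my] _ Hmin.
have aL : a \in downset S m by rewrite inE aS (ltW am).
have mL : m \in downset S m by rewrite inE mS lexx.
have cov : covers (downset S m) a m.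
  rewrite /covers aL mL am /=; apply/forall_inP => w; rewrite inE => /andP[wS wm].
  apply/negP => /andP[aw wm'].
  have := Hmin w; rewrite inE wS aw (le_trans wm my) => /(_ isT wm) e.
  by move: wm'; rewrite e ltxx.
have [_ Hg] := lg mS.
have [b bL [nba _]] := (Hg a m aL mL).1 cov.
have bL' : b \in downset S m by move: bL; rewrite inE => /andP[].
exists b; split.
- by rewrite -(atom_down bL').
- by apply/eqP => e; move: nba; rewrite e lexx.
- by move: bL'; rewrite inE => /andP[_ bm]; exact: le_trans bm my.
Qed.

Lemma Aa_empty_R y : y \in S -> (a <= y)%O ->
  ([set t in A :\ a | (t <= y)%O] == set0) = (y == a).
Proof.
move=> yS ay; case: (eqVneq y a) => [->|ya].
  apply/eqP/setP => t; rewrite in_set0 in_set; apply/negbTE/andP => -[/setD1P[ta tA] tle].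
  by move/eqP: ta; apply; apply: (atom_le Hm aA tA tle).
have lt : (a < y)%O by rewrite lt_def ya ay.
have [b [bA ba bly]] := other_atom yS lt.
apply/negbTE/set0Pn; exists b; by rewrite in_set in_setD1 ba bA bly.
Qed.


Lemma muS x : x \in S -> mobius S z0 x = wsum A (fun B => B) S x.
Proof.
move=> xS; apply: (mobius_char z0S) => //; last exact: z0le.
move=> y yS _; rewrite (@wsum_down S S A z0 y (fun B => B)) //.
- by rewrite alt_le A_empty.
- by move=> B sB; exact: subset_trans sB AS.
- by move=> B z _ m; have [zS _] := mub_ub m; rewrite zS z0le.
Qed.

Lemma muD x : x \in D -> mobius D z0 x = wsum (A :\ a) (fun B => B) S x.
Proof.
move=> xD; apply: (mobius_char z0D) => //; last by rewrite z0le // (subsetP D_sub).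
move=> y yD _; rewrite (@wsum_down S D (A :\ a) z0 y (fun B => B)) //.
- by rewrite alt_le Aa_empty_D.
- exact: (subsetP D_sub).
- exact: D_sub.
- move=> B sB; apply: subset_trans sB _; apply: subset_trans AS; exact: subsetDl.
- by move=> B z sB m; have [zS _] := mub_ub m; rewrite z0le // (mub_D sB m).
Qed.

Lemma muR x : x \in R -> mobius R a x = wsum (A :\ a) (fun C => a |: C) S x.
Proof.
move=> xR; apply: (mobius_char aR) => //; last by move: xR; rewrite inE => /andP[].
move=> y yR _; have := yR; rewrite inE => /andP[yS ay].
rewrite (@wsum_down S R (A :\ a) a y (fun C => a |: C)) //.
- rewrite -(Aa_empty_R yS ay) -alt_le; apply: eq_bigr => C _.
  congr (if _ then _ else _); apply/forall_inP/forall_inP => H t.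
    by move=> tC; apply: H; rewrite in_setU1 tC orbT.
  by rewrite in_setU1 => /orP[/eqP ->|]; [exact: ay | exact: H].
- exact: R_sub.
- move=> C sC; rewrite subUset sub1set aS /=.
  apply: subset_trans sC _; apply: subset_trans AS; exact: subsetDl.
- move=> C z sC m; have [zS Hz] := mub_ub m.
  have az : (a <= z)%O by apply: Hz; rewrite setU11.
  by rewrite inE zS az.
Qed.

Lemma wsum_split x : wsum A (fun B => B) S x =
  wsum (A :\ a) (fun B => B) S x - wsum (A :\ a) (fun C => a |: C) S x.
Proof.
rewrite /wsum (split_sub _ aA); congr (_ + _); rewrite -sumrN; apply: eq_bigr => C sC.
have aC : a \notin C by move: sC; rewrite subsetD1 => /andP[].
by rewrite cardsU1 aC add1n exprS mulN1r; case: ifP => //; rewrite oppr0.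
Qed.


Lemma height_R y : y \in R -> height R y = (height S y).-1.
Proof.
move=> yR; have := yR; rewrite inE => /andP[yS ay].
apply/eqP; rewrite eqn_leq; apply/andP; split.
  have [C [sC yC ch HC ->]] := height_wit yR.
  have sCS : C \subset S := subset_trans sC R_sub.
  have z0C : z0 \notin C.
    apply/negP => z0C; have := subsetP sC z0 z0C; rewrite inE => /andP[_ az].
    have [_ _ an _] := atomP Hm aA; move/eqP: an; apply; apply/le_anti.
    by rewrite az z0le // aS.
  have := @height_ge S y (z0 |: C); rewrite cardsU1 z0C /=.
  move=> /(_ _ _ _ _) H.
  have : (#|C| <= height S y)%N.
    apply: H.
    - by rewrite subUset sub1set z0S.
    - by rewrite in_setU1 yC orbT.
    - by apply: chainU1b => // c cC; rewrite z0le // (subsetP sCS).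
    - by move=> c; rewrite in_setU1 => /orP[/eqP ->|/HC //]; rewrite z0le.
  by move=> h; rewrite -!subn1 leq_sub2r.
suff H : forall n y, (height S y < n)%N -> y \in S -> (a <= y)%O ->
    ((height S y).-1 <= height R y)%N by exact: (H (height S y).+1).
elim=> [|n IH] {yR yS ay}y Hn yS ay; first by rewrite ltn0 in Hn.
case: (eqVneq y a) => [->|ya].
  by have [_ -> _ _] := atomP Hm aA.
have aX : a \in [set w in S | (a <= w)%O && (w < y)%O] by rewrite inE aS lexx lt_def ya ay.
have [z [] ] := ex_maximal aX; rewrite inE => /and3P[zS az zy] _ Hmax.
have cov : covers S z y.
  rewrite /covers zS yS zy /=; apply/forall_inP => w wS; apply/negP => /andP[zw wy].
  have wX : w \in [set w in S | (a <= w)%O && (w < y)%O].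
    by rewrite inE wS wy (le_trans az (ltW zw)).
  have e := Hmax w wX (ltW zw); by move: zw; rewrite e ltxx.
have hy := rk cov.
have IHz := IH z _ zS az.
have zR : z \in R by rewrite inE zS az.
have yR : y \in R by rewrite inE yS ay.
have := height_lt zR yR zy.
move=> hlt; move: IHz Hn; rewrite hy => IHz Hn; have h1 := IHz Hn.
exact: leq_trans (leqSpred _) (leq_ltn_trans h1 hlt).
Qed.

Lemma height_D_aux x : x \in S -> forall n (B : {set T}), #|B| = n -> B \subset A :\ a ->
  (forall t, t \in B -> (t <= x)%O) ->
  forall y, y \in min_upper_bounds S B -> (y <= x)%O -> (height S y <= height D y)%N.
Proof.
move=> xS; have [[Hjoin _] Hg] := lg xS.
have sAaS : A :\ a \subset S by apply: subset_trans AS; exact: subsetDl.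
elim=> [|n IH] B cB sB Bx y m yx.
  move: m; rewrite (cards0_eq cB) => /mub0; rewrite Hm inE => /eqP ->.
  by rewrite height_min.
have [b bB] : exists b, b \in B by apply/card_gt0P; rewrite cB.
have bA : b \in A by move: (subsetP sB b bB); rewrite inE => /andP[].
have bS : b \in S := subsetP AS b bA.
set B0 := B :\ b.
have cB0 : #|B0| = n by move: cB; rewrite (cardsD1 b) bB add1n => -[].
have sB0 : B0 \subset A :\ a by apply: subset_trans sB; exact: subsetDl.
have B0x : forall t, t \in B0 -> (t <= x)%O by move=> t; rewrite inE => /andP[_ /Bx].
have [y0 m0 y0x] := mub_exists xS B0x.
have IH0 := IH B0 cB0 sB0 B0x y0 m0 y0x.
have [y0S Hy0] := mub_ub m0.
have y0L : y0 \in downset S x by rewrite inE y0S y0x.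
have bL : b \in downset S x by rewrite inE bS Bx.
have [j /and4P[jL y0j bj /forall_inP Hj]] := Hjoin y0 b y0L bL.
have := jL; rewrite inE => /andP[jS jx].
have jm : j \in min_upper_bounds S B.
  apply: mub_intro => //.
    move=> t tB; case: (eqVneq t b) => [->//|tb].
    by apply: le_trans y0j; apply: Hy0; rewrite /B0 in_setD1 tb tB.
  move=> w wS Hw wj.
  have wx : (w <= x)%O := le_trans wj jx.
  have Hw0 : forall t, t \in B0 -> (t <= w)%O by move=> t; rewrite inE => /andP[_ /Hw].
  have [y1 m1 y1w] := mub_exists wS Hw0.
  have e : y1 = y0.
    apply: (mub_unique lg xS _ m1 m0 (le_trans y1w wx) y0x).
    exact: subset_trans sB0 sAaS.
  have wL : w \in downset S x by rewrite inE wS wx.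
  have := Hj w wL; rewrite -e y1w Hw // => /= jw.
  by apply/le_anti; rewrite jw wj.
have e : y = j by apply: (mub_unique lg xS _ m jm yx jx); exact: subset_trans sB sAaS.
subst y.
case: (boolP (b <= y0)%O) => bley0.
  have e : j = y0.
    apply/le_anti; rewrite y0j andbT; move: (Hj y0 y0L); rewrite lexx bley0; by [].
  by rewrite e.
have cov : covers (downset S x) y0 j.
  apply/(Hg y0 j y0L jL); exists b; first by rewrite atom_down.
  by split => //; rewrite /is_join jL y0j bj /=; apply/forall_inP.
have covS := covers_down cov.
have hj := rk covS.
have lt : (y0 < j)%O by move: covS => /and4P[].
move: (height_lt (mub_D sB0 m0) (mub_D sB jm) lt) => h.
by rewrite hj; exact: leq_ltn_trans IH0 h.
Qed.

Lemma height_D x : x \in D -> height D x = height S x.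
Proof.
move=> xD; apply/eqP; rewrite eqn_leq height_le_sub ?D_sub //=.
case: (D_cases xD) => [->|[B [_ sB m]]]; first by rewrite height_min.
have [xS Hx] := mub_ub m.
exact: (height_D_aux xS (erefl #|B|) sB Hx m (lexx x)).
Qed.


Lemma arith1 k r h : (h <= r)%N -> (r <= k)%N -> (k - r + (r - h) = k - h)%N.
Proof. lia. Qed.

Lemma arith2 k r h : (1 <= h)%N -> (h.-1 <= r)%N -> (r <= k.-1)%N ->
  (k.-1 - r + (r - h.-1) = k - h)%N.
Proof. lia. Qed.

Lemma hS_rank x : x \in S -> (height S x <= poset_rank S)%N.
Proof. by move=> xS; apply: (leq_bigmax_cond x). Qed.

Lemma hD_rank x : x \in D -> (height S x <= poset_rank D)%N.
Proof. by move=> xD; rewrite -height_D //; apply: (leq_bigmax_cond x). Qed.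

Lemma rD_rank : (poset_rank D <= poset_rank S)%N.
Proof.
apply/bigmax_leqP => x xD; rewrite height_D //; apply: hS_rank; exact: (subsetP D_sub).
Qed.

Lemma hR_rank x : x \in R -> ((height S x).-1 <= poset_rank R)%N.
Proof. by move=> xR; rewrite -height_R //; apply: (leq_bigmax_cond x). Qed.

Lemma rR_rank : (poset_rank R <= (poset_rank S).-1)%N.
Proof.
apply/bigmax_leqP => x xR; rewrite height_R // -!subn1 leq_sub2r //.
apply: hS_rank; exact: (subsetP R_sub).
Qed.

Lemma hR_pos x : x \in R -> (1 <= height S x)%N.
Proof.
rewrite inE => /andP[xS ax]; have [_ ha _ _] := atomP Hm aA.
case: (eqVneq x a) => [->|xa]; first by rewrite ha.
rewrite -ha; apply: ltnW; apply: height_lt => //; first exact: aS.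
by rewrite lt_def xa ax.
Qed.

Lemma char_rel : Defs.char_poly S =
  'X^(poset_rank S - poset_rank D) * Defs.char_poly D
  - 'X^((poset_rank S).-1 - poset_rank R) * Defs.char_poly R.
Proof.
rewrite /Defs.char_poly (bottom_ofE Hm) (bottom_ofE minD) (bottom_ofE minR).
rewrite (eq_bigr (fun x => (wsum (A :\ a) (fun B => B) S x)%:P * 'X^(poset_rank S - height S x)
   - (wsum (A :\ a) (fun C => a |: C) S x)%:P * 'X^(poset_rank S - height S x))); last first.
  by move=> x xS; rewrite muS // wsum_split polyCB mulrBl.
rewrite sumrB; congr (_ - _).
  rewrite (bigID (fun x => x \in D)) /= [X in _ + X]big1 ?addr0; last first.
    move=> x /andP[xS xD]; rewrite /wsum big1 ?mul0r //.
    by move=> B sB; case: ifP => // m; move: xD; rewrite (mub_D sB m).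
  rewrite mulr_sumr (eq_bigl (fun x => x \in D)); last first.
    by move=> x; case xD: (x \in D); rewrite ?andbF // andbT (subsetP D_sub).
  apply: eq_bigr => x xD; rewrite muD // height_D // mulrCA -exprD arith1 //.
    exact: hD_rank.
  exact: rD_rank.
rewrite (bigID (fun x => x \in R)) /= [X in _ + X]big1 ?addr0; last first.
  move=> x /andP[xS xR]; rewrite /wsum big1 ?mul0r //.
  move=> C sC; case: ifP => // m; move: xR; have [_ H] := mub_ub m.
  by rewrite inE xS H // setU11.
rewrite mulr_sumr (eq_bigl (fun x => x \in R)); last first.
  by move=> x; case xR: (x \in R); rewrite ?andbF // andbT (subsetP R_sub).
apply: eq_bigr => x xR; rewrite muR // height_R // mulrCA -exprD arith2 //.
- exact: hR_pos.
- exact: hR_rank.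
- exact: rR_rank.
Qed.

End Main.

End Poset.

Theorem proposition3p8 (disp : Order.disp_t) (T : finPOrderType disp) (S : {set T}) :
  inductive_poset S -> divisional_poset S.
Proof.
elim=> [S0 cS | S0 a std lg aA _ _ _ IHR [q Hq]]; first exact: divisional_base.
apply: (divisional_step std lg aA IHR).
have [hum rkS] := std.
have [z0 Hm] : exists z0, minimals S0 = [set z0] by apply/cards1P/eqP.
exists ('X^(poset_rank S0 - poset_rank (deletion S0 a)) * q
        - 'X^((poset_rank S0).-1 - poset_rank (restriction S0 a)))%R.
by rewrite (char_rel Hm rkS lg aA) Hq mulrBl mulrA.
Qed.
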